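(* Let $x^*\in\mathcal X$. If $\hat\eta_f(x^*,\hat{\mathbb Y}_d)=0$ for some $\hat{\mathbb Y}_d=\{y_d^1,\dots,y_d^k\}\subseteq\mathbb Y_d$, then $\eta_f(x^* )=0$, i.e. $x^*$ is feasible for $\mathcal U(x^* )$. If $r_f(x^*,u^* )>0$ for some $u^*\in\mathcal U(x^* )$, then $\eta_f(x^* )>0$, i.e. $x^*$ is infeasible for $\mathcal U(x^* )$.
   Context: $\mathcal X=\{x\in\mathbb R^{n_x}_+\times\mathbb Z^{m_x}_+: Ax\ge b\}$; $\mathcal U(x)=\{u\in\mathbb R^{n_u}_+: F(x)u\le h+Gx\}$, nonempty and bounded for $x\in\mathcal X$; $\mathcal Y(x,u)=\{(y_c,y_d)\in\mathbb R^{n_y}_+\times\mathbb Y_d: B_{2,c}y_c+B_{2,d}y_d\ge d-B_1x-Eu\}$, $\mathbb Y_d\subseteq\mathbb Z^{m_y}_+$ finite; $x$ is feasible for $\mathcal U(x)$ if $\mathcal Y(x,u)\ne\emptyset$ for all $u\in\mathcal U(x)$. $\tilde{\mathcal Y}(x,u)=\{(y_c,y_d,\tilde y): B_{2,c}y_c+B_{2,d}y_d+\mathbf1\tilde y\ge d-B_1x-Eu,\ y_c\ge0,\ y_d\in\mathbb Y_d,\ \tilde y\ge0\}$ ($\tilde y$ scalar). Define $\eta_f(x)=\max_{u\in\mathcal U(x)}\min\{\tilde y:(y_c,y_d,\tilde y)\in\tilde{\mathcal Y}(x,u)\}$; $r_f(x,u)=\min\{\tilde y:(y_c,y_d,\tilde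 y)\in\tilde{\mathcal Y}(x,u)\}$; and $\hat\eta_f(x,\hat{\mathbb Y}_d)=\max\{\hat\eta_f: u\in\mathcal U(x),\ \hat\eta_f\le\min\{\tilde y^t: B_{2,c}y_c^t+\mathbf1\tilde y^t\ge d-B_1x-Eu-B_{2,d}y_d^t,\ y_c^t\ge0,\ \tilde y^t\ge0\}\ \text{for } t=1,\dots,k\}$. *)

(* Defs.v *)
From HB Require Import structures.
From mathcomp Require Import all_boot all_order all_algebra.
From mathcomp Require Import all_classical all_reals.
Set Implicit Arguments. Unset Strict Implicit. Unset Printing Implicit Defensive.
Import Order.TTheory GRing.Theory Num.Theory.
Local Open Scope ring_scope.
Local Open Scope classical_set_scope.

Definition lev (R : realType) n (a b : 'cV[R]_n) : Prop := forall i, a i 0 <= b i 0.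
Definition nonneg (R : realType) n (a : 'cV[R]_n) : Prop := forall i, 0 <= a i 0.
Definition is_int (R : realType) (a : R) : Prop := exists z : int, a = z%:~R.

(* Problem data.  x = (x_c, x_d) is stored as one column vector of size
   nx + mx: the first nx entries are continuous, the last mx integral.
   y_d lives in 'cV_my; Yd is the finite set of admissible y_d (a seq). *)
Record data (R : realType) (nx mx na nu p ny my q : nat) := Data {
  A : 'M[R]_(na, nx + mx); b : 'cV[R]_na;
  F : 'cV[R]_(nx + mx) -> 'M[R]_(p, nu); h : 'cV[R]_p; G : 'M[R]_(p, nx + mx);
  B1 : 'M[R]_(q, nx + mx); B2c : 'M[R]_(q, ny); B2d : 'M[R]_(q, my);
  E : 'M[R]_(q, nu); d : 'cV[R]_q;
  Yd : seq 'cV[R]_my }.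

Section Defs.
Variables (R : realType) (nx mx na nu p ny my q : nat).
Variable D : data R nx mx na nu p ny my q.

Definition inX (x : 'cV[R]_(nx + mx)) : Prop :=
  nonneg x /\ (forall i : 'I_mx, is_int (x (rshift nx i) 0)) /\
  lev (b D) (A D *m x).

Definition Uset (x : 'cV[R]_(nx + mx)) : set 'cV[R]_nu :=
  [set u | nonneg u /\ lev (F D x *m u) (h D + G D *m x)].

Definition rhs (x : 'cV[R]_(nx + mx)) (u : 'cV[R]_nu) : 'cV[R]_q :=
  d D - B1 D *m x - E D *m u.

Definition Y_nonempty x u : Prop :=
  exists (yc : 'cV[R]_ny) (yd : 'cV[R]_my),
    nonneg yc /\ yd \in Yd D /\ lev (rhs x u) (B2c D *m yc + B2d D *m yd).

Definition feasible x : Prop := forall u, Uset x u -> Y_nonempty x u.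

Definition r_f x u : R :=
  inf [set yt : R | exists (yc : 'cV[R]_ny) (yd : 'cV[R]_my),
         [/\ nonneg yc, yd \in Yd D, 0 <= yt &
             lev (rhs x u) (B2c D *m yc + B2d D *m yd + const_mx yt)]].

Definition eta_f x : R := sup [set r_f x u | u in Uset x].

Definition lp_t x u (ydt : 'cV[R]_my) : R :=
  inf [set yt : R | exists yc : 'cV[R]_ny,
         [/\ nonneg yc, 0 <= yt &
             lev (rhs x u - B2d D *m ydt) (B2c D *m yc + const_mx yt)]].

Definition eta_hat x k (yhat : 'I_k -> 'cV[R]_my) : R :=
  sup [set e : R | exists u, Uset x u /\ forall t, e <= lp_t x u (yhat t)].

End Defs.

(* Main.v *)
Require Import Defs.
From HB Require Import structures.
From mathcomp Require Import all_boot all_order all_algebra.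
From mathcomp Require Import all_classical all_reals.
From mathcomp Require Import lra.
Import Order.TTheory GRing.Theory Num.Theory.
Local Open Scope ring_scope.
Local Open Scope classical_set_scope.
Section FM.
Variable R : realType.

Lemma le0_eps (x w : R) : 0 <= w -> (forall eps : R, 0 < eps -> x - eps * w <= 0) -> x <= 0.
Proof.
move=> w0 H; have [we|wn0] := eqVneq w 0.
  by have := H 1 ltr01; rewrite we mulr0 subr0.
have wp : 0 < w by rewrite lt_def wn0 w0.
apply/ler_addgt0Pr => e e0; rewrite add0r.
have := H (e / w) (divr_gt0 e0 wp); rewrite divfK //; lra.
Qed.

Lemma fm (n : nat) : forall (I : finType) (a : I -> 'I_n -> R) (c w : I -> R),
  (forall i, 0 <= w i) ->
  (forall eps, 0 < eps -> exists y : 'I_n -> R, (forall j, 0 <= y j) /\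
       forall i, c i - eps * w i <= \sum_j a i j * y j) ->
  exists y : 'I_n -> R, (forall j, 0 <= y j) /\ forall i, c i <= \sum_j a i j * y j.
Proof.
elim: n => [|n IH] I a c w w0 H.
  exists (fun _ => 0); split => // i; rewrite big_ord0.
  apply: (@le0_eps (c i) (w i) (w0 i)) => eps e0.
  by have [y [_ /(_ i)]] := H eps e0; rewrite big_ord0.
pose ea (o : option I) : 'I_n.+1 -> R :=
  if o is Some i then a i else fun j => (j == ord_max)%:R.
pose ec (o : option I) : R := if o is Some i then c i else 0.
pose ew (o : option I) : R := if o is Some i then w i else 0.
pose al o := ea o ord_max.
pose lam (p : option I * option I) : R :=
  if al p.1 == 0 then 1 else if (0 < al p.1) && (al p.2 < 0) then - al p.2 else 0.
pose mu (p : option I * option I) : R :=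
  if al p.1 == 0 then 0 else if (0 < al p.1) && (al p.2 < 0) then al p.1 else 0.
have lam0 p : 0 <= lam p.
  rewrite /lam; case: ifP => // _; case: ifP => // /andP[_]; lra.
have mu0 p : 0 <= mu p.
  rewrite /mu; case: ifP => // _; case: ifP => // /andP[]; lra.
have lammu p : lam p * al p.1 + mu p * al p.2 = 0.
  rewrite /lam /mu; case: ifP => [/eqP->|_]; first lra.
  case: ifP => _; lra.
pose wd (j : 'I_n) := widen_ord (leqnSn n) j.
pose a' p (j : 'I_n) := lam p * ea p.1 (wd j) + mu p * ea p.2 (wd j).
pose c' p := lam p * ec p.1 + mu p * ec p.2.
pose w' p := lam p * ew p.1 + mu p * ew p.2.
have sumE o (y : 'I_n.+1 -> R) : \sum_j ea o j * y j =
    \sum_(j < n) ea o (wd j) * y (wd j) + al o * y ord_max.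
  by rewrite big_ord_recr.
have sum'E p (y : 'I_n -> R) : \sum_j a' p j * y j =
    lam p * \sum_(j < n) ea p.1 (wd j) * y j + mu p * \sum_(j < n) ea p.2 (wd j) * y j.
  rewrite !mulr_sumr -big_split /=; apply: eq_bigr => j _; rewrite /a'; lra.
have sNone (y : 'I_n -> R) : \sum_(j < n) ea None (wd j) * y j = 0.
  apply: big1 => j _ /=.
  have -> : (wd j == ord_max) = false.
    by apply/negbTE; rewrite neq_ltn /= ltn_ord.
  by rewrite mul0r.
have w'0 p : 0 <= w' p.
  by rewrite /w'; case: p => [[i|] [k|]] /=; rewrite ?mulr0 ?addr0 ?add0r;
    try apply: addr_ge0; try apply: mulr_ge0.
have [y' [y'0 Hy']] : exists y' : 'I_n -> R, (forall j, 0 <= y' j) /\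
    forall p, c' p <= \sum_j a' p j * y' j.
  apply: (IH _ a' c' w' w'0) => eps e0.
  have [y [y0 Hy]] := H eps e0.
  exists (fun j => y (wd j)); split => // p.
  have Hext o : ec o - eps * ew o <= \sum_j ea o j * y j.
    case: o => [i|]; first exact: Hy.
    rewrite sumE sNone /al /= eqxx mul1r add0r mulr0; have := y0 ord_max; lra.
  rewrite sum'E.
  have h1 := Hext p.1; have h2 := Hext p.2.
  rewrite !sumE in h1 h2.
  have l0 := lam0 p; have m0 := mu0 p; have lm := lammu p.
  rewrite /c' /w'.
  set S1 := \sum_(j < n) _ in h1 *; set S2 := \sum_(j < n) _ in h2 *.
  have e1 := ler_wpM2l l0 h1; have e2 := ler_wpM2l m0 h2.
  have : lam p * (al p.1 * y ord_max) + mu p * (al p.2 * y ord_max) = 0.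
    by rewrite !mulrA -mulrDl lm mul0r.
  nra.
pose s o := \sum_(j < n) ea o (wd j) * y' j.
have Hp p : lam p * ec p.1 + mu p * ec p.2 <= lam p * s p.1 + mu p * s p.2.
  by have := Hy' p; rewrite sum'E.
pose z := \big[Order.max/0]_(o | 0 < al o) ((ec o - s o) / al o).
have z0 : 0 <= z by apply: bigmax_ge_id.
pose y (j : 'I_n.+1) := if unlift ord_max j is Some j' then y' j' else z.
have ywd j : y (wd j) = y' j.
  rewrite /y.
  have -> : wd j = lift ord_max j by apply: val_inj; rewrite [RHS]lift_max.
  by rewrite liftK.
have ymax : y ord_max = z by rewrite /y unlift_none.
exists y; split.
  by move=> j; rewrite /y; case: unlift.
move=> i; have := sumE (Some i) y.
rewrite /= => ->.
under eq_bigr do rewrite ywd.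
rewrite ymax.
have -> : \sum_(j < n) a i (wd j) * y' j = s (Some i) by [].
have -> : a i ord_max = al (Some i) by [].
set o := Some i.
have alo : al o = a i ord_max by [].
have eco : ec o = c i by [].
have [al0| aln0] := eqVneq (a i ord_max) 0.
  have := Hp (o, o); rewrite /lam /mu /= al0 eqxx; lra.
have [alp|aln] := ltP 0 (a i ord_max).
  have := @le_bigmax_cond _ _ _ 0 o (fun o => 0 < al o) (fun o => (ec o - s o) / al o) alp.
  rewrite -/z /= => hz.
  rewrite ler_pdivrMr // in hz; lra.
have alneg : a i ord_max < 0 by rewrite lt_neqAle aln0 aln.
suff : z <= (s o - c i) / (- a i ord_max).
  rewrite ler_pdivlMr ?oppr_gt0 //; nra.
apply: bigmax_le.
  have sN : s None = 0 := sNone y'.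
  have l1 : lam (None, o) = - a i ord_max.
    by rewrite /lam /= /al /= eqxx oner_eq0 ltr01 alneg.
  have m1 : mu (None, o) = 1.
    by rewrite /mu /= /al /= eqxx oner_eq0 ltr01 alneg.
  have := Hp (None, o); rewrite l1 m1 /= sN => h.
  apply: divr_ge0; lra.
move=> o' alp'.
have := Hp (o', o); rewrite /lam /mu /= (gt_eqF alp') alp' /= alneg /= => h.
rewrite ler_pdivlMr ?oppr_gt0 // mulrAC ler_pdivrMr //.
nra.
Qed.
End FM.

Section Aux.
Variable R : realType.

Lemma entryB m n (A B : 'M[R]_(m, n)) i j : (A - B) i j = A i j - B i j.
Proof. by rewrite !mxE. Qed.
Lemma entryD m n (A B : 'M[R]_(m, n)) i j : (A + B) i j = A i j + B i j.
Proof. by rewrite !mxE. Qed.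
Lemma entryC m n (a : R) i j : (const_mx a : 'M[R]_(m, n)) i j = a.
Proof. by rewrite !mxE. Qed.
Lemma entryM m n (A : 'M[R]_(m, n)) (v : 'cV[R]_n) i :
  (A *m v) i 0 = \sum_j A i j * v j 0.
Proof. by rewrite !mxE. Qed.

Lemma term_le_sum (I : finType) (T : I -> R) i : (forall j, 0 <= T j) ->
  T i <= \sum_j T j.
Proof.
move=> T0; rewrite (bigD1 i) //= lerDl; apply: sumr_ge0 => j _; exact: T0.
Qed.
Lemma le_sum_term {I : finType} {T : I -> R} i {x : R} : (forall j, 0 <= T j) ->
  x <= T i -> x <= \sum_j T j.
Proof. by move=> T0 h; exact: le_trans h (term_le_sum I T i T0). Qed.
End Aux.

Section Main.
Set Implicit Arguments.
Variables (R : realType) (nx mx na nu p ny my q : nat).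
Variable D : data R nx mx na nu p ny my q.

Definition Bnd (x : 'cV[R]_(nx + mx)) (M : R) (yd : 'cV[R]_my) : R :=
  \sum_i (`|d D i 0| + `|(B1 D *m x) i 0| + \sum_j `|E D i j| * `|M|
          + `|(B2d D *m yd) i 0|).

Lemma Bnd_ge0 (x : 'cV[R]_(nx + mx)) (M : R) (yd : 'cV[R]_my) : 0 <= Bnd x M yd.
Proof.
apply: sumr_ge0 => i _; rewrite !addr_ge0 //; apply: sumr_ge0 => j _.
exact: mulr_ge0.
Qed.

Lemma Bnd_ub (x : 'cV[R]_(nx + mx)) (M : R) (yd : 'cV[R]_my) (u : 'cV[R]_nu) : (forall i, `|u i 0| <= M) ->
  forall i, (rhs D x u - B2d D *m yd) i 0 <= Bnd x M yd.
Proof.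
move=> uM i; rewrite /rhs !entryB /Bnd.
rewrite (bigD1 i) //=.
set rest := \sum_(i0 < q | i0 != i) _.
have r0 : 0 <= rest.
  apply: sumr_ge0 => j _; rewrite !addr_ge0 //; apply: sumr_ge0 => k _; exact: mulr_ge0.
have hE : `|(E D *m u) i 0| <= \sum_j `|E D i j| * `|M|.
  rewrite entryM; apply: le_trans (ler_norm_sum _ _ _) _.
  apply: ler_sum => j _; rewrite normrM; apply: ler_wpM2l => //.
  exact: le_trans (uM j) (ler_norm M).
have h1 := ler_norm (d D i 0).
have h2 := ler_norm (- (B1 D *m x) i 0); rewrite normrN in h2.
have h3 := ler_norm (- (E D *m u) i 0); rewrite normrN in h3.
have h4 := ler_norm (- (B2d D *m yd) i 0); rewrite normrN in h4.
lra.
Qed.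

Lemma inf_ge0' (E0 : set R) : (forall e, E0 e -> 0 <= e) -> 0 <= inf E0.
Proof.
move=> H; have [ne|ne] := pselect (nonempty E0).
  by apply: lb_le_inf => // e /H.
have -> : E0 = set0.
  by apply/seteqP; split => y Ey //; exfalso; apply: ne; exists y.
by rewrite inf0.
Qed.

Lemma inf_le_elem (E0 : set R) e : (forall e, E0 e -> 0 <= e) -> E0 e -> inf E0 <= e.
Proof. by move=> H Ee; apply: ge_inf => //; exists 0 => y /H. Qed.

Lemma lp_ge0 x u ydt : 0 <= lp_t D x u ydt.
Proof. by apply: inf_ge0' => e [yc [_ ?]]. Qed.

Lemma rf_ge0 x u : 0 <= r_f D x u.
Proof. by apply: inf_ge0' => e [yc [yd [_ _ ?]]]. Qed.

Lemma lp_le_bnd (x : 'cV[R]_(nx + mx)) u ydt (Bd : R) : 0 <= Bd ->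
  (forall i, (rhs D x u - B2d D *m ydt) i 0 <= Bd) -> lp_t D x u ydt <= Bd.
Proof.
move=> B0 H; apply: inf_le_elem; first by move=> e [yc [_ ?]].
exists 0; split => //; first by move=> i; rewrite mxE.
by move=> i; rewrite mulmx0 add0r entryC.
Qed.

Lemma rf_le_bnd (x : 'cV[R]_(nx + mx)) u yd (Bd : R) : yd \in Yd D -> 0 <= Bd ->
  (forall i, (rhs D x u - B2d D *m yd) i 0 <= Bd) -> r_f D x u <= Bd.
Proof.
move=> Hyd B0 H; apply: inf_le_elem; first by move=> e [yc [yd' [_ _ ?]]].
exists 0, yd; split => //; first by move=> i; rewrite mxE.
move=> i; rewrite mulmx0 add0r.
have -> : (B2d D *m yd + const_mx Bd) i 0 = (B2d D *m yd) i 0 + Bd.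
  by rewrite entryD entryC.
have := H i; rewrite entryB; lra.
Qed.

Lemma lp_attained (x : 'cV[R]_(nx + mx)) u ydt (Bd : R) : 0 <= Bd ->
  (forall i, (rhs D x u - B2d D *m ydt) i 0 <= Bd) -> lp_t D x u ydt <= 0 ->
  exists yc : 'cV[R]_ny, nonneg yc /\ lev (rhs D x u - B2d D *m ydt) (B2c D *m yc).
Proof.
move=> B0 HB Hlp.
have Heps : forall eps : R, 0 < eps -> exists y : 'I_ny -> R, (forall j, 0 <= y j) /\
       forall i, (rhs D x u - B2d D *m ydt) i 0 - eps * 1 <= \sum_j B2c D i j * y j.
  move=> eps e0.
  have hinf : has_inf [set yt : R | exists yc : 'cV[R]_ny,
         [/\ nonneg yc, 0 <= yt &
             lev (rhs D x u - B2d D *m ydt) (B2c D *m yc + const_mx yt)]].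
    split; last by exists 0 => e [yc [_ ?]].
    exists Bd, 0; split => //; first by move=> i; rewrite mxE.
    by move=> i; rewrite mulmx0 add0r entryC.
  have [e [yc [yc0 e0' Hl]] He] := inf_adherent e0 hinf.
  exists (fun j => yc j 0); split => // i.
  have := Hl i.
  have -> : (B2c D *m yc + const_mx e) i 0 = \sum_j B2c D i j * yc j 0 + e.
    by rewrite entryD entryC entryM.
  have : e < eps by move: Hlp He; rewrite /lp_t; lra.
  lra.
have [y [y0 Hy]] := @fm R ny 'I_q (fun i j => B2c D i j)
   (fun i => (rhs D x u - B2d D *m ydt) i 0) (fun _ => 1) (fun _ => ler01) Heps.
exists (\col_j y j); split; first by move=> i; rewrite mxE.
move=> i; rewrite entryM; under eq_bigr do rewrite mxE.
by apply: le_trans (Hy i) _.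
Qed.

End Main.

Theorem corollary26 (R : realType) (nx mx na nu p ny my q : nat)
  (D : data R nx mx na nu p ny my q)
  (HYd : forall yd, yd \in Yd D -> nonneg yd /\ forall i, is_int (yd i 0))
  (HYd0 : Yd D != [::])
  (HU : forall x, inX D x ->
          (exists u, Uset D x u) /\
          (exists M : R, forall u, Uset D x u -> forall i, `|u i 0| <= M))
  (xs : 'cV[R]_(nx + mx)) (Hxs : inX D xs) :
  (forall (k : nat) (yhat : 'I_k -> 'cV[R]_my),
      (0 < k)%N -> (forall t, yhat t \in Yd D) ->
      eta_hat D xs yhat = 0 -> eta_f D xs = 0 /\ feasible D xs) /\
  (forall us, Uset D xs us -> r_f D xs us > 0 ->
      eta_f D xs > 0 /\ ~ feasible D xs).
Proof.
have [[u0 Hu0] [M HM]] := HU xs Hxs.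
have rf0 : feasible D xs -> forall u, Uset D xs u -> r_f D xs u = 0.
  move=> Hf u Hu; apply/le_anti; rewrite rf_ge0 andbT.
  have [yc [yd [yc0 [Hyd Hl]]]] := Hf u Hu.
  apply: inf_le_elem; first by move=> e [? [? [_ _ ?]]].
  exists yc, yd; split => //.
  have -> : const_mx 0 = 0 :> 'cV[R]_q by apply/matrixP => a b; rewrite !mxE.
  by rewrite addr0.
have feas_eta : feasible D xs -> eta_f D xs = 0.
  move=> Hf; rewrite /eta_f.
  have -> : [set r_f D xs u | u in Uset D xs] = [set 0].
    apply/seteqP; split => r.
      by move=> [u Hu <-]; rewrite /= rf0.
    by move=> ->; exists u0 => //; exact: rf0.
  exact: sup1.
split.
  move=> k yhat kpos Hyhat Heh.
  have Hf : feasible D xs.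
    move=> u Hu.
    pose t0 : 'I_k := Ordinal kpos.
    pose S := [set e : R | exists u, Uset D xs u /\ forall t, e <= lp_t D xs u (yhat t)].
    have ubS : has_ubound S.
      exists (Bnd D xs M (yhat t0)) => e [u' [Hu' He]].
      apply: le_trans (He t0) _.
      apply: lp_le_bnd; [exact: Bnd_ge0 | apply: Bnd_ub; exact: HM].
    have [[t Ht]|Hall] := pselect (exists t, lp_t D xs u (yhat t) <= 0).
      have [yc [yc0 Hl]] := lp_attained D xs u (yhat t) _ (Bnd_ge0 D xs M (yhat t))
          (Bnd_ub D xs M (yhat t) u (HM u Hu)) Ht.
      exists yc, (yhat t); split => //; split => // i.
      have := Hl i; rewrite entryB.
      have -> : (B2c D *m yc + B2d D *m yhat t) i 0 =
                (B2c D *m yc) i 0 + (B2d D *m yhat t) i 0 by rewrite entryD.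
      lra.
    exfalso.
    pose m := \big[Order.min/1]_t lp_t D xs u (yhat t).
    have mpos : 0 < m.
      rewrite /m; elim/big_ind: _ => //= [a b ha hb | t _].
        by rewrite lt_min ha hb.
      rewrite ltNge; apply/negP => h; apply: Hall; exists t; exact: h.
    have mS : S m.
      exists u; split => // t; exact: bigmin_le.
    have := ub_le_sup ubS mS.
    have -> : sup S = 0 by exact: Heh.
    lra.
  by split => //; exact: feas_eta.
move=> us Hus Hr.
have nf : ~ feasible D xs.
  by move=> Hf; move: Hr; rewrite rf0 // ltxx.
split => //.
have [yd0 Hyd0] : exists yd, yd \in Yd D.
  by move: HYd0; case: (Yd D) => // a s _; exists a; rewrite inE eqxx.
have ub : has_ubound [set r_f D xs u | u in Uset D xs].
  exists (Bnd D xs M yd0) => r [u Hu <-].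
  exact: rf_le_bnd D xs u yd0 _ Hyd0 (Bnd_ge0 D xs M yd0) (Bnd_ub D xs M yd0 u (HM u Hu)).
have := ub_le_sup ub (ex_intro2 _ _ us Hus erefl).
rewrite -/(eta_f D xs); lra.
Qed.
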